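(* Let $(\Omega,D,X)$ be a recombination scheme. For every cone $\rho$ of $D$ with apex $\tau$ and legs $\rho_i:\tau\to\theta(i)$, $i\in[k]$, the canonical morphism $DX(\tau)\to\prod_{i\in[k]}DX(\theta(i))$, whose components are the maps $DX(\rho_i)$, is a monomorphism in $\mathbf{Icm}$.
   Context: For $n\ge1$, $[n]=\{1,\dots,n\}$ ordered as usual, $[0]=\emptyset$. For a pre-ordered set $(\Omega,\preceq)$, a segment is a pair $(t,c)$ with $t:[n_1]\to[n_0]$ an order-preserving surjection and $c:[n_0]\to\Omega$; its domain is $[n_1]$. A morphism $(t,c)\to(t',c')$ is a pair $(f_1,f_0)$, $f_1:[n_1]\to[n_1']$ an order-preserving injection, $f_0:[n_0]\to[n_0']$ order-preserving, with $t'f_1=f_0t$ and $c'(f_0(i))\preceq c(i)$ for all $i$; this gives the category $\mathbf{Seg}(\Omega)$. $\mathbf{Seg}(\Omega\,|\,n)$ is the subcategory of segments of domain $[n]$ and morphisms with $f_1=\mathrm{id}$. A wide span is a finite family of arrows $\rho_i:\tau\to\theta(i)$, $i\in[k]$, with common domain (apex) $\tau$. A recombination chromology $(\Omega,D)$ is a pre-ordered set $\Omega$ with, for every $n\ge0$, a finite set $D[n]$ of wide spans in $\mathbf{Seg}(\Omega\,|\,n)$ (the cones of $D$). $\mathbf{Icm}$ is the category of idempotent commutative monoids and monoid morphisms. For a functor $X:\mathbf{Seg}(\Omega)\to\mathbf{Icm}$ and a cone $\rho$ of $D$ with apex $\upsilon$ and legs $\rho_i:\upsilon\to\theta(i)$,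 $X[\rho]:X(\upsilon)\to\prod_iX(\theta(i))$ has components $X(\rho_i)$, and $\mathsf{prj}_1,\mathsf{prj}_2:G(X,\rho)\rightrightarrows X(\upsilon)$ is the pullback of $X[\rho]$ along itself. The recombination monoid $DX:\mathbf{Seg}(\Omega)\to\mathbf{Icm}$: for each $\tau$, $q_X:X(\tau)\to DX(\tau)$ is the universal morphism in $\mathbf{Icm}$ out of $X(\tau)$ satisfying $q_X\circ X(f)\circ\mathsf{prj}_1=q_X\circ X(f)\circ\mathsf{prj}_2$ for every cone $\rho$ of $D$ (with apex $\upsilon$) and every arrow $f:\upsilon\to\tau$ in $\mathbf{Seg}(\Omega)$ (i.e. the coequalizer of the induced pair out of the coproduct of the $G(X,\rho)$); for $g:\tau\to\tau'$, $DX(g)$ is the unique morphism with $DX(g)\circ q_X=q_X\circ X(g)$. An object $\sigma$ is irreducible for $(\Omega,D,X)$ if for every arrow $f:\upsilon\to\sigma$ and every cone $\rho$ of $D$ with apex $\upsilon$, $X(f)\circ\mathsf{prj}_1=X(f)\circ\mathsf{prj}_2$ on $G(X,\rho)$. A recombination scheme is a triple $(\Omega,D,X)$ with $(\Omega,D)$ a recombination chromology and $X:\mathbf{Seg}(\Omega)\to\mathbf{Icm}$ a functor such that for every cone $\rho$ of $D$ with legs $\rho_i:\tau\to\theta(i)$, every $\theta(i)$ is irreducible for $(\Omega,D,X)$. *)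

(* Defs.v *)
From HB Require Import structures.
From mathcomp Require Import all_boot.
From Stdlib Require Import FunctionalExtensionality.
From Stdlib Require List.

Set Implicit Arguments.
Unset Strict Implicit.
Unset Printing Implicit Defensive.

Record icm := ICM {
  icm_car :> Type;
  icm_op : icm_car -> icm_car -> icm_car;
  icm_e : icm_car;
  icm_opA : forall x y z, icm_op x (icm_op y z) = icm_op (icm_op x y) z;
  icm_opC : forall x y, icm_op x y = icm_op y x;
  icm_op1 : forall x, icm_op icm_e x = x;
  icm_opI : forall x, icm_op x x = x }.

Record icm_hom (M N : icm) := IcmHom {
  ih_fun :> M -> N;
  ih_op : forall x y, ih_fun (icm_op x y) = icm_op (ih_fun x) (ih_fun y);
  ih_e : ih_fun (icm_e M) = icm_e N }.

Definition icm_mono (M N : icm) (u : icm_hom M N) : Prop :=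
  forall (P : icm) (g h : icm_hom P M),
    (forall x, u (g x) = u (h x)) -> forall x, g x = h x.

Section Product.
Variables (k : nat) (F : 'I_k -> icm).

Definition prod_op (x y : forall i, F i) : forall i, F i :=
  fun i => icm_op (x i) (y i).
Definition prod_e : forall i, F i := fun i => icm_e (F i).

Lemma prod_opA x y z : prod_op x (prod_op y z) = prod_op (prod_op x y) z.
Proof. apply: functional_extensionality_dep => i; exact: icm_opA. Qed.
Lemma prod_opC x y : prod_op x y = prod_op y x.
Proof. apply: functional_extensionality_dep => i; exact: icm_opC. Qed.
Lemma prod_op1 x : prod_op prod_e x = x.
Proof. apply: functional_extensionality_dep => i; exact: icm_op1. Qed.
Lemma prod_opI x : prod_op x x = x.
Proof. apply: functional_extensionality_dep => i; exact: icm_opI. Qed.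

Definition prod_icm : icm := ICM prod_opA prod_opC prod_op1 prod_opI.

Variables (M : icm) (u : forall i, icm_hom M (F i)).

Definition tuple_fun (x : M) : prod_icm := fun i => u i x.
Lemma tuple_fun_op x y :
  tuple_fun (icm_op x y) = icm_op (tuple_fun x) (tuple_fun y).
Proof. apply: functional_extensionality_dep => i; exact: ih_op. Qed.
Lemma tuple_fun_e : tuple_fun (icm_e M) = icm_e prod_icm.
Proof. apply: functional_extensionality_dep => i; exact: ih_e. Qed.

Definition tuple_hom : icm_hom M prod_icm := IcmHom tuple_fun_op tuple_fun_e.
End Product.

(* [n] = {1,..,n} is represented by 'I_n = {0,..,n-1} (same order).   *)

Record preord := Preord {
  po_car :> Type;
  po_le : po_car -> po_car -> Prop;
  po_refl : forall x, po_le x x;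
  po_trans : forall x y z, po_le x y -> po_le y z -> po_le x z }.

Definition ord_monotone n m (f : 'I_n -> 'I_m) : Prop :=
  forall i j : 'I_n, i <= j -> f i <= f j.

Section Seg.
Variable Om : preord.

(* A segment (t, c): t : [n1] -> [n0] order-preserving surjection,
   c : [n0] -> Omega; its domain is [n1] = [sdom]. *)
Record segment := Segment {
  sdom : nat;
  scod : nat;
  st : 'I_sdom -> 'I_scod;
  st_mono : ord_monotone st;
  st_surj : forall j, exists i, st i = j;
  sc : 'I_scod -> Om }.

Record seg_hom (s s' : segment) := SegHom {
  f1 : 'I_(sdom s) -> 'I_(sdom s');
  f0 : 'I_(scod s) -> 'I_(scod s');
  f1_mono : ord_monotone f1;
  f1_inj : injective f1;
  f0_mono : ord_monotone f0;
  f_comm : forall i, @st s' (f1 i) = f0 (@st s i);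
  f_col : forall i, po_le (@sc s' (f0 i)) (@sc s i) }.

Definition seg_id (s : segment) : seg_hom s s.
Proof.
refine (@SegHom s s id id _ _ _ _ _) => //.
move=> i; exact: po_refl.
Defined.

Definition seg_comp (s s' s'' : segment) (f : seg_hom s s') (g : seg_hom s' s'')
  : seg_hom s s''.
Proof.
refine (@SegHom s s'' (f1 g \o f1 f) (f0 g \o f0 f) _ _ _ _ _).
- by move=> i j ij; apply: f1_mono; apply: f1_mono.
- exact: inj_comp (@f1_inj _ _ g) (@f1_inj _ _ f).
- by move=> i j ij; apply: f0_mono; apply: f0_mono.
- by move=> i /=; rewrite f_comm f_comm.
- by move=> i /=; apply: po_trans (f_col g (f0 f i)) (f_col f i).
Defined.

(* Functors Seg(Omega) -> Icm.  Since a morphism of Seg(Omega) is the pair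
   (f1, f0) (the other record fields are proofs), the morphism action is
   required to depend only on (f1, f0). *)
Record seg_functor := SegFunctor {
  Fo : segment -> icm;
  Fm : forall s s', seg_hom s s' -> icm_hom (Fo s) (Fo s');
  Fm_ext : forall s s' (f g : seg_hom s s'),
      f1 f =1 f1 g -> f0 f =1 f0 g -> forall x, Fm f x = Fm g x;
  Fm_id : forall s x, Fm (seg_id s) x = x;
  Fm_comp : forall s s' s'' (f : seg_hom s s') (g : seg_hom s' s'') x,
      Fm (seg_comp f g) x = Fm g (Fm f x) }.

(* A wide span in Seg(Omega | n): apex and targets of domain [n], legs
   with f1 = id.  Legs are indexed by [k] = 'I_arity. *)
Record cone (n : nat) := Cone {
  apex : segment;
  arity : nat;
  target : 'I_arity -> segment;
  leg : forall i, seg_hom apex (target i);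
  apex_dom : sdom apex = n;
  target_dom : forall i, sdom (target i) = n;
  leg_id : forall i j, val (f1 (leg i) j) = val j }.

(* A recombination chromology on Omega: finitely many cones D[n] for each n. *)
Arguments leg {n} c i.
Arguments target {n} c i.

Definition chromology := forall n : nat, list (cone n).

Definition is_cone (D : chromology) n (rho : cone n) : Prop := List.In rho (D n).

Section WithX.
Variables (X : seg_functor) (D : chromology).

(* (a, b) in the pullback G(X, rho) of X[rho] along itself. *)
Definition in_G n (rho : cone n) (a b : Fo X (apex rho)) : Prop :=
  forall i, Fm X (leg rho i) a = Fm X (leg rho i) b.

Definition irreducible (sigma : segment) : Prop :=
  forall n (rho : cone n), is_cone D rho ->
  forall (f : seg_hom (apex rho) sigma) a b,
    in_G a b -> Fm X f a = Fm X f b.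

Definition recombination_scheme : Prop :=
  forall n (rho : cone n), is_cone D rho ->
  forall i, irreducible (target rho i).

Definition recomb_compatible (sigma : segment) (M : icm)
  (h : icm_hom (Fo X sigma) M) : Prop :=
  forall n (rho : cone n), is_cone D rho ->
  forall (f : seg_hom (apex rho) sigma) a b,
    in_G a b -> h (Fm X f a) = h (Fm X f b).

Definition is_recomb_quotient (sigma : segment) (Q : icm)
  (q : icm_hom (Fo X sigma) Q) : Prop :=
  recomb_compatible q /\
  forall (M : icm) (h : icm_hom (Fo X sigma) M), recomb_compatible h ->
    (exists u : icm_hom Q M, forall x, u (q x) = h x) /\
    (forall u u' : icm_hom Q M,
        (forall x, u (q x) = h x) -> (forall x, u' (q x) = h x) ->
        forall y, u y = u' y).

(* The recombination monoid DX (determined up to unique isomorphism by its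
   universal property): objects DX(tau) with universal q_X, and the arrow
   action DX(g) characterised by DX(g) o q_X = q_X o X(g). *)
Record recomb_monoid := RecombMonoid {
  DXo : segment -> icm;
  qX : forall s, icm_hom (Fo X s) (DXo s);
  qX_univ : forall s, is_recomb_quotient (qX s);
  DXm : forall s s', seg_hom s s' -> icm_hom (DXo s) (DXo s');
  DXm_q : forall s s' (g : seg_hom s s') x,
      DXm g (qX s x) = qX s' (Fm X g x) }.

End WithX.
End Seg.

Arguments leg {Om n} c i.
Arguments target {Om n} c i.
Arguments apex {Om n} c.
Arguments arity {Om n} c.

(* Main.v *)
Require Import Defs.
From mathcomp Require Import all_boot.
From Stdlib Require Import ProofIrrelevance.

Set Implicit Arguments.
Unset Strict Implicit.

Section Img.
Variables (A Q : icm) (q : icm_hom A Q).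

Definition img_car := {y : Q | exists a, q a = y}.

Definition img_op (x y : img_car) : img_car.
Proof.
refine (exist _ (icm_op (proj1_sig x) (proj1_sig y)) _).
case: x => [x [a ha]]; case: y => [y [b hb]] /=.
exists (icm_op a b); by rewrite ih_op ha hb.
Defined.

Definition img_e : img_car.
Proof. refine (exist _ (icm_e Q) _); exists (icm_e A); exact: ih_e. Defined.

Lemma img_opA x y z : img_op x (img_op y z) = img_op (img_op x y) z.
Proof. apply: subset_eq_compat; exact: icm_opA. Qed.
Lemma img_opC x y : img_op x y = img_op y x.
Proof. apply: subset_eq_compat; exact: icm_opC. Qed.
Lemma img_op1 x : img_op img_e x = x.
Proof. case: x => x p; apply: subset_eq_compat; exact: icm_op1. Qed.
Lemma img_opI x : img_op x x = x.
Proof. case: x => x p; apply: subset_eq_compat; exact: icm_opI. Qed.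

Definition img_icm : icm := ICM img_opA img_opC img_op1 img_opI.

Definition qc_fun (a : A) : img_icm := exist _ (q a) (ex_intro _ a erefl).
Lemma qc_op x y : qc_fun (icm_op x y) = icm_op (qc_fun x) (qc_fun y).
Proof. apply: subset_eq_compat; exact: ih_op. Qed.
Lemma qc_e : qc_fun (icm_e A) = icm_e img_icm.
Proof. apply: subset_eq_compat; exact: ih_e. Qed.
Definition qc : icm_hom A img_icm := IcmHom qc_op qc_e.

Definition incl_fun (y : img_icm) : Q := proj1_sig y.
Lemma incl_op x y : incl_fun (icm_op x y) = icm_op (incl_fun x) (incl_fun y).
Proof. by []. Qed.
Lemma incl_e : incl_fun (icm_e img_icm) = icm_e Q.
Proof. by []. Qed.
Definition incl : icm_hom img_icm Q := IcmHom incl_op incl_e.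

Definition id_hom (M : icm) : icm_hom M M :=
  @IcmHom M M id (fun _ _ => erefl) erefl.
End Img.

Lemma q_surj (Om : preord) (X : seg_functor Om) (D : chromology Om)
  s (Q : icm) (q : icm_hom (Fo X s) Q) :
  is_recomb_quotient D q -> forall y, exists a, q a = y.
Proof.
move=> [comp univ] y.
have compc : recomb_compatible D (qc q).
  move=> n rho Hr f a b G; apply: subset_eq_compat; exact: comp.
have [[v hv] _] := univ _ _ compc.
have [_ uniq] := univ _ q comp.
have wop : forall a b, incl q (v (icm_op a b)) = icm_op (incl q (v a)) (incl q (v b)).
  by move=> a b; rewrite !ih_op.
have we : incl q (v (icm_e Q)) = icm_e Q by rewrite !ih_e.
pose w : icm_hom Q Q := IcmHom wop we.
have E := uniq w (id_hom Q) (fun x => ltac:(by rewrite /w /= hv)) (fun x => erefl) y.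
rewrite /= in E.
rewrite -E; exact: (proj2_sig (v y)).
Qed.

Lemma q_inj_irr (Om : preord) (X : seg_functor Om) (D : chromology Om)
  s (Q : icm) (q : icm_hom (Fo X s) Q) :
  is_recomb_quotient D q -> irreducible X D s -> forall a b, q a = q b -> a = b.
Proof.
move=> [comp univ] Hirr.
have compid : recomb_compatible D (id_hom (Fo X s)).
  move=> n rho Hr f a b G; exact: Hirr.
have [[r hr] _] := univ _ _ compid.
move=> a b E; have := f_equal r E; by rewrite !hr.
Qed.

Theorem mainTheorem8 (Om : preord) (X : seg_functor Om) (D : chromology Om)
  (DX : recomb_monoid X D) :
  recombination_scheme X D ->
  forall (n : nat) (rho : cone Om n), is_cone D rho ->
  icm_mono (tuple_hom (fun i : 'I_(arity rho) => DXm DX (leg rho i))).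
Proof.
move=> Hs n rho Hr P g h Hgh x.
have [a ha] := q_surj (qX_univ DX (apex rho)) (g x).
have [b hb] := q_surj (qX_univ DX (apex rho)) (h x).
have G : @in_G Om X n rho a b.
  move=> i.
  have := f_equal (fun F => F i) (Hgh x); rewrite /= /tuple_fun -ha -hb !DXm_q.
  exact: q_inj_irr (qX_univ DX _) (Hs _ _ Hr i) _ _.
have [comp _] := qX_univ DX (apex rho).
have := comp _ rho Hr (seg_id _) a b G.
by rewrite !Fm_id ha hb.
Qed.
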